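(* Let $q$ be an odd prime power, $d \ge 1$ and $n \ge 2$ integers, and $M_n(\mathbb{F}_q)$ the set of $n\times n$ matrices over $\mathbb{F}_q$. Define the sum-product digraph $G$ with vertex set $V = M_n(\mathbb{F}_q)^{d+1}$, where there is a directed edge from $(A_1,\dots,A_d,E)$ to $(B_1,\dots,B_d,F)$ if and only if $A_1B_1 + A_2B_2 + \dots + A_dB_d = E + F$. Then $G$ is a $\left(q^{(d+1)n^2},\, q^{dn^2},\, C q^{dn^2 - (d-1)n/2 - 1/2}\right)$-digraph for some positive constant $C$ (depending only on $d$ and $n$).
   Context: A digraph $G$ is an $(N,D,\lambda)$-digraph if it has $N$ vertices, every vertex has in-degree and out-degree both equal to $D$, and $\lambda(G) \le \lambda$, where $\lambda(G) = \max\{|\lambda_i| : |\lambda_i| \ne D\}$ is the maximum modulus over the (possibly complex) eigenvalues $\lambda_i$ of the adjacency matrix $A_G$ of $G$ ($(A_G)_{uv}=1$ if there is a directed edge from $u$ to $v$, and $0$ otherwise) whose modulus is not equal to $D$. *)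

(* Defs.v *)
From HB Require Import structures.
From mathcomp Require Import all_boot all_order all_algebra all_field.
Set Implicit Arguments. Unset Strict Implicit. Unset Printing Implicit Defensive.
Import Order.TTheory GRing.Theory Num.Theory.
Local Open Scope ring_scope.

(* A digraph is given by a finite vertex type T and an edge relation e : rel T
   (e u v means there is a directed edge u -> v). *)

Definition adj_mx (T : finType) (e : rel T) : 'M[algC]_#|T| :=
  \matrix_(i, j) ((e (enum_val i) (enum_val j))%:R : algC).

Definition NDL_digraph (T : finType) (e : rel T) (N D : nat) (lam : algC) : Prop :=
  [/\ #|T| = N,
      (forall u : T, #|[set v | e u v]| = D),
      (forall v : T, #|[set u | e u v]| = D) &
      (forall z : algC, root (char_poly (adj_mx e)) z ->
         `|z| != D%:R -> `|z| <= lam)].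

Definition sp_vertex (F : finFieldType) (d n : nat) : finType :=
  ({ffun 'I_d -> 'M[F]_n} * 'M[F]_n)%type.

Definition sp_edge (F : finFieldType) (d n : nat) : rel (sp_vertex F d n) :=
  fun x y => \sum_(i < d) (x.1 i *m y.1 i) == x.2 + y.2.

(* Main.v *)
Require Import Defs.
From HB Require Import structures.
From mathcomp Require Import all_boot all_order all_algebra all_field.
From mathcomp Require Import ring zify.
Import Order.TTheory GRing.Theory Num.Theory.
Local Open Scope ring_scope.

Lemma amgm (a b : algC) : 2%:R * (`|a| * `|b|) <= `|a| ^+ 2 + `|b| ^+ 2.
Proof.
have h : 0 <= (`|a| - `|b|) ^+ 2.
  by rewrite -real_normK ?exprn_ge0 // rpredB // normr_real.
rewrite -subr_ge0; apply: le_trans h _; rewrite le_eqVlt; apply/orP; left; apply/eqP.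
ring.
Qed.

Lemma cs_sum (I : finType) (a : I -> algC) :
  `|\sum_i a i| ^+ 2 <= #|I|%:R * \sum_i `|a i| ^+ 2.
Proof.
have h1 : `|\sum_i a i| ^+ 2 <= (\sum_i `|a i|) ^+ 2.
  rewrite ler_pXn2r // ?ler_norm_sum // qualifE /= ?normr_ge0 //.
  by rewrite sumr_ge0 // => i _; rewrite normr_ge0.
apply: le_trans h1 _.
rewrite expr2 mulr_suml.
have e : forall i, `|a i| * \sum_j `|a j| = \sum_j `|a i| * `|a j|.
  by move=> i; rewrite mulr_sumr.
under eq_bigr do rewrite e.
rewrite -(ler_pM2l (_ : 0 < 2%:R)) //.
apply: (le_trans (y := \sum_i \sum_j (`|a i| ^+ 2 + `|a j| ^+ 2))).
  rewrite mulr_sumr; apply: ler_sum => i _. 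
  rewrite mulr_sumr. apply: ler_sum => j _. exact: amgm.
under eq_bigr do rewrite big_split /=.
rewrite big_split /=.
under eq_bigr do rewrite sumr_const -mulr_natl.
rewrite sumr_const -mulr_sumr -mulr_natl.
rewrite le_eqVlt; apply/orP; left; apply/eqP; ring.
Qed.

Lemma sum_delta (T : finType) (c : T) (h : T -> algC) :
  \sum_(E : T) (E == c)%:R * h E = h c.
Proof.
rewrite (bigD1 c) //= eqxx mul1r big1 ?addr0 // => E /negbTE ->.
by rewrite mul0r.
Qed.

Lemma swap4 (I1 I2 I3 I4 : finType) (H : I1 -> I2 -> I3 -> I4 -> algC) :
  \sum_a \sum_b \sum_c \sum_d H a b c d = \sum_c \sum_d \sum_a \sum_b H a b c d.
Proof.
transitivity (\sum_a \sum_c \sum_b \sum_d H a b c d).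
  by apply: eq_bigr => a _; rewrite exchange_big.
rewrite exchange_big; apply: eq_bigr => c _.
transitivity (\sum_a \sum_d \sum_b H a b c d).
  by apply: eq_bigr => a _; rewrite exchange_big.
by rewrite exchange_big.
Qed.

Section SP.
Variables (F : finFieldType) (d n : nat).
Local Notation Mt := 'M[F]_n.
Local Notation Dt := {ffun 'I_d -> 'M[F]_n}.

Definition smul (A B : Dt) : Mt := \sum_(i < d) (A i *m B i).
Definition dsub (A A' : Dt) : Dt := [ffun i => A i - A' i].
Definition dadd (A A' : Dt) : Dt := [ffun i => A i + A' i].
Definition good (D : Dt) : bool := [forall G : Mt, exists B : Dt, smul D B == G].
Definition kappa : algC := #|Dt|%:R / #|{: Mt}|%:R.

Lemma smulBl A A' B : smul (dsub A A') B = smul A B - smul A' B.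
Proof.
by rewrite /smul -sumrB; apply: eq_bigr => i _; rewrite ffunE mulmxBl.
Qed.

Lemma smulDr A B B' : smul A (dadd B B') = smul A B + smul A B'.
Proof.
by rewrite /smul -big_split; apply: eq_bigr => i _; rewrite ffunE mulmxDr.
Qed.

Lemma dsub_inj A : injective (dsub A).
Proof.
move=> X Y /ffunP h; apply/ffunP => i; move: (h i); rewrite !ffunE.
by move/addrI/oppr_inj.
Qed.

Lemma dsubl_inj A : injective (fun X => dsub X A).
Proof.
move=> X Y /ffunP h; apply/ffunP => i; move: (h i); rewrite !ffunE.
by move/addIr.
Qed.

Lemma daddl_inj A : injective (fun X => dadd X A).
Proof.
move=> X Y /ffunP h; apply/ffunP => i; move: (h i); rewrite !ffunE.
by move/addIr.
Qed.

Lemma fiber_sum0 (D : Dt) (h : Mt -> algC) :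
  \sum_(B : Dt) h (smul D B) =
  \sum_(G : Mt) h G * \sum_(B : Dt) (G == smul D B)%:R.
Proof.
rewrite (eq_bigr (fun B => \sum_(G : Mt) (G == smul D B)%:R * h G)); last first.
  by move=> B _; rewrite sum_delta.
rewrite exchange_big /=; apply: eq_bigr => G _.
by rewrite mulr_sumr; apply: eq_bigr => B _; rewrite mulrC.
Qed.

Lemma fiber_const (D : Dt) (G : Mt) : good D ->
  \sum_(B : Dt) ((G == smul D B)%:R : algC) = \sum_(B : Dt) ((0 : Mt) == smul D B)%:R.
Proof.
move=> /forallP /(_ G) /existsP [B0 /eqP hB0].
rewrite (reindex_inj (daddl_inj B0)) /=.
apply: eq_bigr => B _; rewrite smulDr hB0.
by rewrite -{1}(add0r G) (inj_eq (addIr G)).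
Qed.

Lemma card_Mt_gt0 : (0 < #|{: Mt}|)%N.
Proof. by apply/card_gt0P; exists 0. Qed.

Lemma fiber_sum (D : Dt) (h : Mt -> algC) : good D ->
  \sum_(B : Dt) h (smul D B) = kappa * \sum_(G : Mt) h G.
Proof.
move=> gD.
have e : forall h : Mt -> algC, \sum_(B : Dt) h (smul D B) =
    (\sum_(B : Dt) ((0 : Mt) == smul D B)%:R) * \sum_(G : Mt) h G.
  move=> h'; rewrite fiber_sum0 mulr_sumr; apply: eq_bigr => G _.
  by rewrite fiber_const // mulrC.
rewrite e; congr (_ * _).
have := e (fun _ => 1); rewrite !sumr_const => e1.
rewrite /kappa.
have nz : (#|{: Mt}|%:R : algC) != 0 by rewrite pnatr_eq0 -lt0n card_Mt_gt0.
apply: (mulIf nz); rewrite mulfVK //.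
Qed.


Section Main.
Variable f : Dt * Mt -> algC.

Definition gg (B : Dt) (Fm : Mt) : algC := \sum_(A : Dt) f (A, smul A B - Fm).
Definition PP (A A' : Dt) : algC :=
  \sum_(B : Dt) \sum_(Fm : Mt) f (A, smul A B - Fm) * (f (A', smul A' B - Fm))^*.
Definition ss (A : Dt) : algC := \sum_(E : Mt) f (A, E).
Definition nrm (A : Dt) : algC := \sum_(E : Mt) `|f (A, E)| ^+ 2.

Lemma L1 : \sum_(B : Dt) \sum_(Fm : Mt) `|gg B Fm| ^+ 2 =
  \sum_(A : Dt) \sum_(A' : Dt) PP A A'.
Proof.
rewrite /PP.
transitivity (\sum_(B : Dt) \sum_(Fm : Mt) \sum_(A : Dt) \sum_(A' : Dt)
   f (A, smul A B - Fm) * (f (A', smul A' B - Fm))^*).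
  apply: eq_bigr => B _; apply: eq_bigr => Fm _.
  rewrite normCK /gg rmorph_sum mulr_suml; apply: eq_bigr => A _.
  by rewrite mulr_sumr.
by rewrite swap4.
Qed.

Lemma L2 A A' : good (dsub A A') -> PP A A' = kappa * ss A * (ss A')^*.
Proof.
move=> gD; rewrite /PP.
transitivity (\sum_(E : Mt) f (A, E) *
   \sum_(B : Dt) (f (A', E - smul (dsub A A') B))^*).
  transitivity (\sum_(B : Dt) \sum_(E : Mt) f (A, E) * (f (A', E - smul (dsub A A') B))^*).
    apply: eq_bigr => B _.
    rewrite (reindex_inj (subrI (smul A B))) /=.
    apply: eq_bigr => E _.
    by rewrite smulBl opprB addrC subrK !opprB addrCA.
  by rewrite exchange_big /=; apply: eq_bigr => E _; rewrite mulr_sumr.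
rewrite /ss (mulrC kappa) -mulrA mulr_suml; apply: eq_bigr => E _.
congr (_ * _).
rewrite (fiber_sum _ (fun G => (f (A', E - G))^*)) //.
rewrite (reindex_inj (subrI E)) /= rmorph_sum.
congr (_ * _).
by apply: eq_bigr => G _; rewrite opprB addrC subrK.
Qed.


Lemma nrm_shift A (c : Mt) : \sum_(Fm : Mt) `|f (A, c - Fm)| ^+ 2 = nrm A.
Proof. by rewrite /nrm [RHS](reindex_inj (subrI c)). Qed.

Lemma L3 A A' : 2 * `|PP A A'| <= #|Dt|%:R * (nrm A + nrm A').
Proof.
have h1 : `|PP A A'| <= \sum_(B : Dt) \sum_(Fm : Mt)
    `|f (A, smul A B - Fm)| * `|f (A', smul A' B - Fm)|.
  rewrite /PP; apply: le_trans (ler_norm_sum _ _ _) _; apply: ler_sum => B _.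
  apply: le_trans (ler_norm_sum _ _ _) _; apply: ler_sum => Fm _.
  by rewrite normrM norm_conjC.
apply: (le_trans (y := 2 * \sum_(B : Dt) \sum_(Fm : Mt)
    `|f (A, smul A B - Fm)| * `|f (A', smul A' B - Fm)|)).
  by rewrite ler_pM2l.
rewrite mulr_sumr.
apply: (le_trans (y := \sum_(B : Dt) \sum_(Fm : Mt)
    (`|f (A, smul A B - Fm)| ^+ 2 + `|f (A', smul A' B - Fm)| ^+ 2))).
  apply: ler_sum => B _; rewrite mulr_sumr; apply: ler_sum => Fm _; exact: amgm.
under eq_bigr do rewrite big_split /= !nrm_shift.
by rewrite sumr_const mulr_natl.
Qed.

Lemma kappaE : kappa * #|{: Mt}|%:R = #|Dt|%:R.
Proof.
have nz : (#|{: Mt}|%:R : algC) != 0 by rewrite pnatr_eq0 -lt0n card_Mt_gt0.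
by rewrite /kappa mulfVK.
Qed.

Lemma kappa_ge0 : 0 <= kappa.
Proof. by rewrite /kappa divr_ge0 ?ler0n. Qed.

Lemma L4 A A' : 2 * `|kappa * ss A * (ss A')^*| <= #|Dt|%:R * (nrm A + nrm A').
Proof.
rewrite normrM normrM norm_conjC (ger0_norm kappa_ge0) -mulrA mulrCA.
apply: (le_trans (y := kappa * (`|ss A| ^+ 2 + `|ss A'| ^+ 2))).
  by rewrite ler_wpM2l ?kappa_ge0 ?amgm.
rewrite -kappaE -mulrA ler_wpM2l ?kappa_ge0 // mulrDr.
by apply: lerD; apply: cs_sum.
Qed.


Definition Nbad : nat := #|[set D : Dt | ~~ good D]|.

Lemma cntA A : \sum_(A' : Dt) ((~~ good (dsub A A'))%:R : algC) = Nbad%:R.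
Proof.
rewrite /Nbad -sumr_const.
rewrite [RHS](reindex_inj (dsub_inj A)) /= [RHS]big_mkcond /=.
by apply: eq_bigr => X _; rewrite inE; case: (good _).
Qed.

Lemma cntA' A' : \sum_(A : Dt) ((~~ good (dsub A A'))%:R : algC) = Nbad%:R.
Proof.
rewrite /Nbad -sumr_const.
rewrite [RHS](reindex_inj (dsubl_inj A')) /= [RHS]big_mkcond /=.
by apply: eq_bigr => X _; rewrite inE; case: (good _).
Qed.

Lemma Lmain : \sum_(A : Dt) ss A = 0 ->
  \sum_(B : Dt) \sum_(Fm : Mt) `|gg B Fm| ^+ 2 <=
  2 * #|Dt|%:R * Nbad%:R * \sum_(A : Dt) nrm A.
Proof.
move=> hs.
set S := (X in X <= _).
have S0 : 0 <= S by apply: sumr_ge0 => B _; apply: sumr_ge0 => Fm _; apply: exprn_ge0.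
pose Q A A' := kappa * ss A * (ss A')^*.
pose R A A' := if good (dsub A A') then 0 else PP A A' - Q A A'.
have eP : forall A A', PP A A' = Q A A' + R A A'.
  move=> A A'; rewrite /R; case: ifP => g; first by rewrite L2 // addr0.
  by rewrite addrC subrK.
have SR : S = \sum_(A : Dt) \sum_(A' : Dt) R A A'.
  rewrite /S L1.
  transitivity (\sum_(A : Dt) \sum_(A' : Dt) Q A A' + \sum_(A : Dt) \sum_(A' : Dt) R A A').
    rewrite -big_split /=; apply: eq_bigr => A _.
    by rewrite -big_split /=; apply: eq_bigr => A' _; rewrite eP.
  suff -> : \sum_(A : Dt) \sum_(A' : Dt) Q A A' = 0 by rewrite add0r.
  rewrite /Q.
  under eq_bigr do rewrite -mulr_sumr.
  by rewrite -mulr_suml -mulr_sumr hs -rmorph_sum hs rmorph0 !mulr0.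
have bR : forall A A', `|R A A'| <=
    (~~ good (dsub A A'))%:R * (#|Dt|%:R * (nrm A + nrm A')).
  move=> A A'; rewrite /R; case: (good _) => /=.
    by rewrite normr0 mul0r.
  rewrite mul1r; apply: le_trans (ler_normB _ _) _.
  rewrite -(ler_pM2l (_ : 0 < 2)) // mulrDr.
  apply: (le_trans (y := #|Dt|%:R * (nrm A + nrm A') + #|Dt|%:R * (nrm A + nrm A'))).
    by apply: lerD; [apply: L3 | apply: L4].
  by rewrite mulr2n mulrDl mul1r.
rewrite -(ger0_norm S0) SR.
apply: le_trans (ler_norm_sum _ _ _) _.
apply: (le_trans (y := \sum_(A : Dt) \sum_(A' : Dt)
   (~~ good (dsub A A'))%:R * (#|Dt|%:R * (nrm A + nrm A')))).
  apply: ler_sum => A _; apply: le_trans (ler_norm_sum _ _ _) _.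
  by apply: ler_sum => A' _; apply: bR.
rewrite le_eqVlt; apply/orP; left; apply/eqP.
transitivity (#|Dt|%:R * (\sum_(A : Dt) \sum_(A' : Dt) ((~~ good (dsub A A'))%:R * nrm A)
   + \sum_(A : Dt) \sum_(A' : Dt) ((~~ good (dsub A A'))%:R * nrm A'))).
  rewrite -big_split /= mulr_sumr; apply: eq_bigr => A _.
  rewrite -big_split /= mulr_sumr; apply: eq_bigr => A' _.
  by rewrite mulrDr mulrDr mulrDr mulrCA [_ * (_ * nrm A')]mulrCA.
rewrite [X in _ * (_ + X)]exchange_big /=.
under eq_bigr do rewrite -mulr_suml cntA.
under [X in _ * (_ + X)]eq_bigr do rewrite -mulr_suml cntA'.
rewrite -!mulr_sumr.
rewrite mulr2n; ring.
Qed.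

End Main.

Lemma bad_ker (D : Dt) : ~~ good D ->
  exists u : 'rV[F]_n, u != 0 /\ forall j, u *m D j = 0.
Proof.
move=> nG.
pose Rm := \mxrow_(j < d) (D j : 'M[F]_(n, (fun _ : 'I_d => n) j)).
case rf: (row_free Rm).
  move/row_freeP: rf => [X hX].
  case/negP: nG; apply/forallP => G; apply/existsP.
  exists [ffun j => submxcol (X *m G) j]; apply/eqP.
  rewrite /smul.
  transitivity (Rm *m \mxcol_j (submxcol (X *m G) j)).
    by rewrite /Rm mul_mxrow_mxcol; apply: eq_bigr => j _; rewrite ffunE.
  by rewrite submxcolK mulmxA hX mul1mx.
have kn0 : kermx Rm != 0.
  apply/eqP => k0.
  have := mxrank_ker Rm; rewrite k0 mxrank0 => /esym /eqP.
  rewrite subn_eq0 => hle.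
  move: rf; rewrite /row_free.
  by rewrite eqn_leq hle rank_leq_row.
have [i hi] : exists i, row i (kermx Rm) != 0.
  apply/existsP; move: kn0; apply: contraR; rewrite negb_exists => /forallP h.
  apply/eqP/row_matrixP => i; rewrite row0; exact/eqP/negPn/h.
exists (row i (kermx Rm)); split => // j.
have h0 : row i (kermx Rm) *m Rm = 0 by rewrite -row_mul mulmx_ker row0.
move: h0; rewrite /Rm mul_mxrow => h0.
have := mxrowK (fun j => row i (kermx Rm) *m D j) j.
by rewrite h0 submxrow0.
Qed.

Lemma bad_ker1 (D : Dt) : ~~ good D ->
  exists p : 'I_n * 'rV[F]_n, (p.2 0 p.1 == 1) && [forall j, p.2 *m D j == 0].
Proof.
move=> /bad_ker [u [un0 hu]].
have [k hk] : exists k, u 0 k != 0.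
  apply/existsP; move: un0; apply: contraR; rewrite negb_exists => /forallP h.
  apply/eqP/rowP => k; rewrite mxE; exact/eqP/negPn/h.
exists (k, (u 0 k)^-1 *: u) => /=; apply/andP; split.
  by rewrite mxE mulVf.
by apply/forallP => j; rewrite -scalemxAl hu scaler0.
Qed.

Lemma ker_inj (k : 'I_n) (u : 'rV[F]_n) (X Y : Mt) : u 0 k = 1 ->
  u *m X = 0 -> u *m Y = 0 -> row' k X = row' k Y -> X = Y.
Proof.
move=> uk hX hY hr.
have re : forall i c, i != k -> X i c = Y i c.
  move=> i c; rewrite eq_sym => /unlift_some [i' -> _].
  by have := congr1 (fun M : 'M[F]_(n.-1, n) => M i' c) hr; rewrite !mxE.
apply/matrixP => i c.
case: (eqVneq i k) => [-> | ?]; last exact: re.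
have : (u *m X) 0 c = (u *m Y) 0 c by rewrite hX hY.
rewrite !mxE (bigD1 k) //= [in RHS](bigD1 k) //= uk !mul1r.
rewrite (eq_bigr (fun i => u 0 i * Y i c)); first by move/addIr.
by move=> j hj; rewrite re.
Qed.

Definition Tt := ('I_n * 'rV[F]_(n.-1) * {ffun 'I_d -> 'M[F]_(n.-1, n)})%type.

Definition choose (D : Dt) := [pick p : 'I_n * 'rV[F]_n |
   (p.2 0 p.1 == 1) && [forall j, p.2 *m D j == 0]].

Definition psi (k0 : 'I_n) (D : Dt) : Tt :=
  match choose D with
  | Some p => (p.1, col' p.1 p.2, [ffun j => row' p.1 (D j)])
  | None => (k0, 0, [ffun => 0])
  end.

Lemma Nbad_le (k0 : 'I_n) : (Nbad <= n * #|F| ^ (1 * n.-1) * (#|F| ^ (n.-1 * n)) ^ d)%N.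
Proof.
rewrite /Nbad -(card_in_imset (f := psi k0)); last first.
  move=> D1 D2; rewrite !inE => b1 b2.
  rewrite /psi /choose.
  case: pickP => [[k1 u1] /= /andP [/eqP h1 /forallP h1']|]; last first.
    by move=> h; have [p hp] := bad_ker1 _ b1; have := h p; rewrite hp.
  case: pickP => [[k2 u2] /= /andP [/eqP h2 /forallP h2']|]; last first.
    by move=> h; have [p hp] := bad_ker1 _ b2; have := h p; rewrite hp.
  case=> ek eu /ffunP ed; subst k2.
  have euu : u1 = u2.
    apply/rowP => c; case: (eqVneq c k1) => [-> | ]; first by rewrite h1 h2.
    rewrite eq_sym => /unlift_some [c' -> _].
    by have := congr1 (fun M : 'rV[F]_(n.-1) => M 0 c') eu; rewrite !mxE.
  subst u2.
  apply/ffunP => j; apply: (ker_inj _ _ _ _ h1); [exact/eqP/h1' | exact/eqP/h2' | ].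
  by have := ed j; rewrite !ffunE.
apply: leq_trans (max_card _) _.
by rewrite !card_prod card_ord card_ffun card_ord !card_mx.
Qed.

End SP.

Arguments smul {F d n}.
Arguments gg {F d n}.
Arguments ss {F d n}.
Arguments nrm {F d n}.
Arguments Lmain {F d n}.

Lemma expo_eq (d n : nat) : (1 <= d)%N -> (2 <= n)%N ->
  (d * n ^ 2 + 1 * n.-1 + (n.-1 * n) * d = 2 * d * n ^ 2 - (d - 1) * n - 1)%N.
Proof.
move=> hd hn.
case: n hn => [|[|m]] // _; case: d hd => [|k] // _.
rewrite /=. nia.
Qed.

Lemma cardD (F : finFieldType) (d n : nat) :
  #|{: {ffun 'I_d -> 'M[F]_n}}| = (#|F| ^ (d * n ^ 2))%N.
Proof.
rewrite card_ffun card_mx card_ord -expnM; congr (expn _ _); lia.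
Qed.

Theorem proposition3p1 (d n : nat) (hd : (1 <= d)%N) (hn : (2 <= n)%N) :
  exists C : algC, C \is Num.real /\ 0 < C /\
    forall (q : nat) (F : finFieldType),
      (exists p k, prime p /\ (0 < k)%N /\ q = (p ^ k)%N) -> odd q ->
      #|F| = q ->
      NDL_digraph (@sp_edge F d n)
        (q ^ ((d.+1) * n ^ 2)) (q ^ (d * n ^ 2))
        (C * sqrtC (q%:R) ^+ (2 * d * n ^ 2 - (d - 1) * n - 1)).
Proof.
exists (2 * n)%:R; split; first exact: realn.
split; first by rewrite ltr0n muln_gt0 /= (leq_trans _ hn).
move=> q F _ _ hq.
split.
- rewrite /sp_vertex card_prod cardD card_mx hq -expnD; congr (expn _ _); lia.
- move=> [A E].
  have -> : [set v | @sp_edge F d n (A, E) v] =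
      [set (B, smul A B - E) | B in [set: {ffun 'I_d -> 'M[F]_n}]].
    apply/setP => -[B Fm]; rewrite inE; apply/idP/imsetP.
      rewrite /sp_edge /= => h; exists B; rewrite ?inE //; congr pair.
      by apply/eqP; rewrite eq_sym subr_eq addrC -/(smul A B).
    by move=> [B' _ [-> ->]]; rewrite /sp_edge /= addrC subrK.
  rewrite card_imset; first by rewrite cardsT cardD hq.
  by move=> B1 B2 [].
- move=> [B Fm].
  have -> : [set u | @sp_edge F d n u (B, Fm)] =
      [set (A, smul A B - Fm) | A in [set: {ffun 'I_d -> 'M[F]_n}]].
    apply/setP => -[A E]; rewrite inE; apply/idP/imsetP.
      rewrite /sp_edge /= => h; exists A; rewrite ?inE //; congr pair.
      by apply/eqP; rewrite eq_sym subr_eq -/(smul A B).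
    by move=> [A' _ [-> ->]]; rewrite /sp_edge /= subrK.
  rewrite card_imset; first by rewrite cardsT cardD hq.
  by move=> A1 A2 [].
move=> z hz hzD.
move: hz; rewrite -eigenvalue_root_char => /eigenvalueP [v hv vn0].
pose f := fun x : sp_vertex F d n => v 0 (enum_rank x).
have eig : forall B Fm, gg f B Fm = z * f (B, Fm).
  move=> B Fm.
  have := congr1 (fun M : 'rV_#|sp_vertex F d n| => M 0 (enum_rank (B, Fm))) hv.
  rewrite /= !mxE => <-.
  rewrite (reindex enum_rank) /=; last exact: onW_bij (@enum_rank_bij _).
  under [RHS]eq_bigr do rewrite /adj_mx mxE !enum_rankK.
  transitivity (\sum_(A : {ffun 'I_d -> 'M[F]_n}) \sum_(E : 'M[F]_n)
     f (A, E) * ((@sp_edge F d n (A, E) (B, Fm))%:R)); last first.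
    by rewrite pair_bigA; apply: eq_bigr => -[a b] _.
  rewrite /gg; apply: eq_bigr => A _.
  have := sum_delta _ (smul A B - Fm) (fun E => f (A, E)); rewrite /= => <-.
  apply: eq_bigr => E _; rewrite mulrC /sp_edge /= -/(smul A B).
  by rewrite eq_sym subr_eq.
have zD : z != #|{: {ffun 'I_d -> 'M[F]_n}}|%:R.
  by apply: contraNneq hzD => ->; rewrite normr_nat cardD hq.
have sum0 : \sum_(A : {ffun 'I_d -> 'M[F]_n}) ss f A = 0.
  have e1 : \sum_(B : {ffun 'I_d -> 'M[F]_n}) \sum_(Fm : 'M[F]_n) gg f B Fm = z * \sum_(A : {ffun 'I_d -> 'M[F]_n}) ss f A.
    rewrite mulr_sumr; apply: eq_bigr => B _; rewrite /ss mulr_sumr.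
    by apply: eq_bigr => Fm _; exact: eig.
  have e2 : \sum_(B : {ffun 'I_d -> 'M[F]_n}) \sum_(Fm : 'M[F]_n) gg f B Fm = #|{: {ffun 'I_d -> 'M[F]_n}}|%:R * \sum_(A : {ffun 'I_d -> 'M[F]_n}) ss f A.
    transitivity (\sum_(B : {ffun 'I_d -> 'M[F]_n}) \sum_(A : {ffun 'I_d -> 'M[F]_n}) ss f A).
      apply: eq_bigr => B _; rewrite /gg exchange_big; apply: eq_bigr => A _.
      by rewrite /ss [RHS](reindex_inj (subrI (smul A B))).
    by rewrite sumr_const mulr_natl.
  have : (z - #|{: {ffun 'I_d -> 'M[F]_n}}|%:R) * \sum_(A : {ffun 'I_d -> 'M[F]_n}) ss f A = 0 by rewrite mulrBl -e1 -e2 subrr.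
  by move/eqP; rewrite mulf_eq0 subr_eq0 (negbTE zD) /= => /eqP.
have main := Lmain f sum0.
have normeq : \sum_(B : {ffun 'I_d -> 'M[F]_n}) \sum_(Fm : 'M[F]_n) `|gg f B Fm| ^+ 2 =
    `|z| ^+ 2 * \sum_(A : {ffun 'I_d -> 'M[F]_n}) nrm f A.
  rewrite mulr_sumr; apply: eq_bigr => B _; rewrite /nrm mulr_sumr.
  by apply: eq_bigr => Fm _; rewrite eig normrM exprMn.
have npos : 0 < \sum_(A : {ffun 'I_d -> 'M[F]_n}) nrm f A.
  have [i hi] : exists i, v 0 i != 0.
    apply/existsP; move: vn0; apply: contraR; rewrite negb_exists => /forallP h.
    apply/eqP/rowP => k; rewrite mxE; exact/eqP/negPn/h.
  have [[a b] hab] : exists x, f x = v 0 i by exists (enum_val i); rewrite /f enum_valK.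
  have nrm0 : forall A, 0 <= nrm f A.
    by move=> A; apply: sumr_ge0 => E _; apply: exprn_ge0; apply: normr_ge0.
  apply: (lt_le_trans (y := `|f (a, b)| ^+ 2)).
    by rewrite exprn_gt0 // normr_gt0 hab.
  apply: (le_trans (y := nrm f a)).
    rewrite /nrm (bigD1 b) //= lerDl; apply: sumr_ge0 => E _.
    by apply: exprn_ge0; apply: normr_ge0.
  by rewrite (bigD1 a) //= lerDl; apply: sumr_ge0 => A _.
have hz2 : `|z| ^+ 2 <= 2 * #|{: {ffun 'I_d -> 'M[F]_n}}|%:R * (Nbad F d n)%:R.
  by rewrite -(ler_pM2r npos) -normeq.
have nb := Nbad_le F d n (Ordinal (leq_trans (isT : (0 < 2)%N) hn)).
rewrite hq in nb.
set e := (2 * d * n ^ 2 - (d - 1) * n - 1)%N.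
have hz3 : `|z| ^+ 2 <= (((2 * n) ^ 2 * q ^ e)%N)%:R.
  apply: le_trans hz2 _.
  rewrite cardD hq -!natrM ler_nat.
  apply: leq_trans (leq_mul (leqnn _) nb) _.
  have eqe : (2 * q ^ (d * n ^ 2) * (n * q ^ (1 * n.-1) * (q ^ (n.-1 * n)) ^ d)
      = 2 * n * q ^ e)%N.
    rewrite /e -expo_eq // !expnD -expnM.
    ring.
  rewrite eqe leq_mul2r; apply/orP; right.
  by rewrite -mulnn leq_pmull // muln_gt0 /= (leq_trans _ hn).
rewrite -(ler_pXn2r (n := 2)) //; last first.
- by rewrite qualifE /= mulr_ge0 ?ler0n // exprn_ge0 // sqrtC_ge0 ler0n.
- by rewrite qualifE /= normr_ge0.
rewrite exprMn -exprM [(e * 2)%N]mulnC exprM sqrtCK.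
by move: hz3; rewrite natrM !natrX.
Qed.
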